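(* For a threshold graph $G$ and an integer $d\ge0$, $\mathrm{degen}(G)=d$ if and only if $\mathrm{seq}(G)$ contains exactly $d$ ones.
   Context: A threshold graph on $n\ge1$ vertices is built from a base vertex $v_0$ by successively adding $v_1,\dots,v_{n-1}$, each either isolated (adjacent to no earlier vertex) or dominating (adjacent to all earlier vertices); its creation sequence $\mathrm{seq}(G)=s_1\cdots s_{n-1}$ has $s_i=1$ if $v_i$ is dominating and $s_i=0$ otherwise. The degeneracy $\mathrm{degen}(G)$ is the maximum over nonempty induced subgraphs $H$ of $G$ of the minimum degree of $H$. *)

(* Defs.v *)
From mathcomp Require Import all_boot.
Set Implicit Arguments. Unset Strict Implicit. Unset Printing Implicit Defensive.

(* A simple graph on a finite type T is given by a relation e (assumed
   symmetric and irreflexive where relevant). *)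

Definition deg_in (T : finType) (e : rel T) (H : {set T}) (v : T) : nat :=
  #|[set u in H | e v u]|.

Definition mindeg_in (T : finType) (e : rel T) (H : {set T}) : nat :=
  \big[minn/#|T|]_(v in H) deg_in e H v.

Definition degen (T : finType) (e : rel T) : nat :=
  \max_(H : {set T} | H != set0) mindeg_in e H.

(* Threshold graph with creation sequence s = s_1 ... s_{n-1}:
   vertices v_0, ..., v_{n-1} are 'I_n with n = size s + 1; for i < j,
   v_i and v_j are adjacent iff v_j is dominating, i.e. s_j = true,
   which is (nth false s j.-1) since s is indexed from 1. *)
Definition threshold_adj (s : seq bool) : rel 'I_(size s).+1 :=
  fun i j => ((i < j) && nth false s j.-1) || ((j < i) && nth false s i.-1).
Arguments threshold_adj s : clear implicits.

(* Main.v *)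
Require Import Defs.
From mathcomp Require Import all_boot.

Lemma count_sumb (s : seq bool) : count id s = \sum_(i < size s) nth false s i.
Proof.
have -> : count id s = \sum_(x <- s) (x : nat).
  by elim: s => [|x s IH]; rewrite ?big_nil ?big_cons //= IH.
by rewrite (big_nth false) big_mkord.
Qed.

Lemma minseq_le (T : eqType) (r : seq T) (F : T -> nat) x v :
  v \in r -> \big[minn/x]_(u <- r) F u <= F v.
Proof.
elim: r => [|a r IH] //; rewrite in_cons big_cons => /orP [/eqP -> | /IH H].
  exact: geq_minl.
exact: leq_trans (geq_minr _ _) H.
Qed.

Section S.
Variable s : seq bool.
Let T := 'I_(size s).+1.
Let e := threshold_adj s.
Let D : {set T} := [set j : T | (0 < j) && nth false s j.-1].

Lemma cardD : #|D| = count id s.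
Proof.
rewrite count_sumb -sum1_card big_mkcond /= big_ord_recl /= inE /=.
apply: eq_bigr => i _; rewrite inE /=.
by case: (nth false s i).
Qed.

Lemma mindeg_up (H : {set T}) : H != set0 -> mindeg_in e H <= #|D|.
Proof.
move=> /set0Pn [x0 Hx0].

case: (arg_minnP (fun i : T => (i : nat)) Hx0) => mm Hm Hmin.
rewrite /mindeg_in -big_filter.
apply: leq_trans (@minseq_le _ _ _ _ mm _) _; first by rewrite mem_filter mem_index_enum andbT.
rewrite /deg_in; apply: subset_leq_card; apply/subsetP => u.
rewrite !inE => /andP [Hu].
have := Hmin u Hu; rewrite /e /threshold_adj.
case: ltngtP => //= mu _ Hs; rewrite orbF in Hs; rewrite Hs andbT.
by apply: leq_ltn_trans mu.
Qed.

Let H0 : {set T} := ord0 |: D.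

Lemma H0clique (u v : T) : u \in H0 -> v \in H0 -> e v u = (u != v).
Proof.
rewrite /H0 !inE /e /threshold_adj => Hu Hv.
case: (ltngtP v u) => vu /=.
- rewrite orbF.
  have -> : u != v by apply/eqP => E; move: vu; rewrite E ltnn.
  case/orP: Hu => [/eqP E|/andP [_ //]]; by move: vu; rewrite E.
- have -> : u != v by apply/eqP => E; move: vu; rewrite E ltnn.
  case/orP: Hv => [/eqP E|/andP [_ //]]; by move: vu; rewrite E.
- by apply/esym/negbTE; rewrite negbK; apply/eqP/val_inj.
Qed.

Lemma mindeg_low : #|D| <= mindeg_in e H0.
Proof.
rewrite /mindeg_in; apply: (big_ind (fun a => #|D| <= a)).
- by rewrite -cardsT subset_leq_card // subsetT.
- by move=> a b Ha Hb; rewrite leq_min Ha Hb.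
move=> v Hv; rewrite /deg_in.
have -> : [set u in H0 | e v u] = H0 :\ v.
  apply/setP => u; rewrite in_set in_setD1 andbC; case Hu: (u \in H0); by rewrite ?andbF ?andbT //= H0clique.
have : #|H0| = #|D|.+1.
  by rewrite /H0 cardsU1 inE /= add1n.
by move=> HC; move: (cardsD1 v H0); rewrite Hv HC add1n => [[->]].
Qed.

Lemma degen_eq : degen e = #|D|.
Proof.
apply/eqP; rewrite eqn_leq; apply/andP; split.
  by apply/bigmax_leqP => H HH; apply: mindeg_up.
apply: leq_trans mindeg_low _.
apply: (leq_bigmax_cond (F := mindeg_in e)).
by apply/set0Pn; exists ord0; rewrite /H0 !inE eqxx.
Qed.

End S.

Theorem mainTheorem12 (s : seq bool) (d : nat) :
  degen (threshold_adj s) = d <-> count id s = d.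
Proof.
by rewrite degen_eq cardD.
Qed.
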